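(* There is a polynomial-time computable retraction from $\mathcal B$ onto the set $\Sigma^{**}$ of length-monotone string functions, i.e. a polynomial-time computable total functional $R\colon\mathcal B\to\mathcal B$ with $R(\mathcal B)\subseteq\Sigma^{**}$ and $R(\varphi)=\varphi$ for all $\varphi\in\Sigma^{**}$.
   Context: $\Sigma=\{0,1\}$, $\mathcal B=(\Sigma^* )^{\Sigma^*}$ is the set of total string functions. $\varphi\in\mathcal B$ is length-monotone if $|\mathbf a|\le|\mathbf b|$ implies $|\varphi(\mathbf a)|\le|\varphi(\mathbf b)|$ for all strings; $\Sigma^{**}$ denotes the set of length-monotone string functions. An oracle Turing machine $M^?$ with oracle $\varphi$ replaces, upon entering its query state, the query-tape content $\mathbf b$ by $\varphi(\mathbf b)$ in one time step; $\operatorname{time}_{M^\varphi}(\mathbf a)$ is its number of steps on input $\mathbf a$. The size function is $|\varphi|(n)=\max\{|\varphi(\mathbf a)|:|\mathbf a|\le n\}$. Second-order polynomials are the smallest class of functions $\mathbb N^{\mathbb N}\times\mathbb N\to\mathbb N$ containing all $(l,n)\mapsto p(n)$ for polynomials $p$ with natural coefficients and closed under pointwise sum, pointwise product, and $P\mapsto P^+$, $P^+(l,n)=l(P(l,n))$. A total functional $F\colon\mathcal B\to\mathcal B$ is polynomial-time computable if some oracle machine $M^?$ with $M^\varphi=F(\varphi)$ for all $\varphi$ satisfies $\operatorname{time}_{M^\varphi}(\mathbf a)\le P(|\varphi|,|\mathbf a|)$ for all $\varphi,\mathbf a$, for some second-order polynomial $P$. *)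

(* Defs.v *)
From mathcomp Require Import all_boot.
Set Implicit Arguments. Unset Strict Implicit. Unset Printing Implicit Defensive.

(* Strings over Sigma = {0,1} (false = 0, true = 1) and total string functions B. *)
Definition str := seq bool.
Definition strfun := str -> str.

Definition length_monotone (phi : strfun) : Prop :=
  forall a b : str, size a <= size b -> size (phi a) <= size (phi b).

Fixpoint strings_of_len (n : nat) : seq str :=
  if n is n'.+1 then [seq x :: s | x <- [:: false; true], s <- strings_of_len n']
  else [:: [::]].
Definition strings_upto (n : nat) : seq str :=
  flatten [seq strings_of_len k | k <- iota 0 n.+1].

Definition sizefun (phi : strfun) (n : nat) : nat :=
  \max_(a <- strings_upto n) size (phi a).

(* Second-order polynomials: syntax generated by constants and n (hence all
   polynomials with natural coefficients), sum, product, and P |-> P^+. *)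
Inductive sopoly :=
| SConst of nat
| SVar
| SAdd of sopoly & sopoly
| SMul of sopoly & sopoly
| SApp of sopoly.

Fixpoint sop_eval (P : sopoly) (l : nat -> nat) (n : nat) : nat :=
  match P with
  | SConst c => c
  | SVar => n
  | SAdd P1 P2 => sop_eval P1 l n + sop_eval P2 l n
  | SMul P1 P2 => sop_eval P1 l n * sop_eval P2 l n
  | SApp P1 => l (sop_eval P1 l n)
  end.

(* A machine has k+3 one-way-infinite tapes: tape 0 = input tape, tape 1 =
   query tape, tape 2 = output tape, the rest are work tapes. *)
Inductive move := MLeft | MStay | MRight.

Record otm := OTM {
  otm_k : nat;
  otm_Q : finType;
  otm_G : finType;
  otm_blank : otm_G;
  otm_zero : otm_G;
  otm_one : otm_G;
  otm_syms_uniq : uniq [:: otm_blank; otm_zero; otm_one];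
  otm_start : otm_Q;
  otm_query : otm_Q;
  otm_answer : otm_Q;
  otm_halt : otm_Q;
  otm_delta : otm_Q -> ('I_otm_k.+3 -> otm_G) ->
              otm_Q * ('I_otm_k.+3 -> otm_G) * ('I_otm_k.+3 -> move)
}.

Section OTMSemantics.
Variable M : otm.

Local Notation G := (otm_G M).
Local Notation Q := (otm_Q M).
Local Notation I := ('I_(otm_k M).+3).

(* a tape: content of cells 0,1,... (blank beyond the list) and head position *)
Record tape := Tape { cells : seq G; hpos : nat }.

Definition tread (t : tape) : G := nth (otm_blank M) (cells t) (hpos t).
Definition twrite (t : tape) (x : G) : tape :=
  Tape (set_nth (otm_blank M) (cells t) (hpos t) x) (hpos t).
Definition tmove (t : tape) (m : move) : tape :=
  match m with
  | MLeft => Tape (cells t) (hpos t).-1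
  | MStay => t
  | MRight => Tape (cells t) (hpos t).+1
  end.

Definition encode (a : str) : seq G :=
  map (fun b : bool => if b then otm_one M else otm_zero M) a.
Fixpoint decode (s : seq G) : str :=
  match s with
  | x :: r => if x == otm_zero M then false :: decode r
              else if x == otm_one M then true :: decode r else [::]
  | [::] => [::]
  end.

Definition config := (Q * (I -> tape))%type.

Definition idx_input : I := inord 0.
Definition idx_query : I := inord 1.
Definition idx_output : I := inord 2.

Definition init_config (a : str) : config :=
  (otm_start M, fun i => if i == idx_input then Tape (encode a) 0 else Tape [::] 0).

Definition step (phi : strfun) (c : config) : config :=
  let: (q, tp) := c in
  if q == otm_halt M then c
  else if q == otm_query M then
    (otm_answer M,
     fun i => if i == idx_query
              then Tape (encode (phi (decode (cells (tp i))))) 0 else tp i)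
  else
    let: (q', w, m) := @otm_delta M q (fun i => tread (tp i)) in
    (q', fun i => tmove (twrite (tp i) (w i)) (m i)).

Definition run (phi : strfun) (a : str) (t : nat) : config :=
  iter t (step phi) (init_config a).

Definition halted (c : config) : bool := c.1 == otm_halt M.
Definition output (c : config) : str := decode (cells (c.2 idx_output)).

End OTMSemantics.

Definition polytime_functional (F : strfun -> strfun) : Prop :=
  exists (M : otm) (P : sopoly), forall (phi : strfun) (a : str),
    exists t, t <= sop_eval P (sizefun phi) (size a) /\
              halted (run M phi a t) /\ output (run M phi a t) = F phi a.

(* Main.v *)
From HB Require Import structures.
From mathcomp Require Import all_boot.
Require Import Defs.
Set Implicit Arguments. Unset Strict Implicit. Unset Printing Implicit Defensive.

Inductive st := Start | Gen | Qry | Ans | Cmp | RewW | Inc | Fin1 | Copy | Out | Halt.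
Definition st2n (s : st) : nat := match s with
 Start => 0 | Gen => 1 | Qry => 2 | Ans => 3 | Cmp => 4 | RewW => 5 | Inc => 6
 | Fin1 => 7 | Copy => 8 | Out => 9 | Halt => 10 end.
Definition n2st (n : nat) : st := match n with
 0 => Start | 1 => Gen | 2 => Qry | 3 => Ans | 4 => Cmp | 5 => RewW | 6 => Inc
 | 7 => Fin1 | 8 => Copy | 9 => Out | _ => Halt end.
Lemma st_K : cancel st2n n2st. Proof. by case. Qed.
HB.instance Definition _ := Countable.copy st (can_type st_K).
Definition st_enum := [:: Start; Gen; Qry; Ans; Cmp; RewW; Inc; Fin1; Copy; Out; Halt].
Lemma st_enumP : Finite.axiom st_enum.
Proof. apply: Finite.uniq_enumP => //; by case. Qed.
HB.instance Definition _ := isFinite.Build st st_enumP.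

Definition sym : finType := option bool.
Definition B : sym := None.
Definition Z0 : sym := Some false.
Definition O1 : sym := Some true.
Lemma syms_uniq : uniq [:: B; Z0; O1]. Proof. by []. Qed.

Definition act := (option sym * move)%type.
Definition K : act := (None, MStay).

Definition dl (q : st) (rI rQ rO rZ rW : sym) : st * seq act :=
  match q with
  | Start => (Gen, [:: K; K; K; (Some O1, MStay); (Some O1, MRight)])
  | Gen => match rZ with
           | Some false => (Gen, [:: K; (Some Z0, MRight); K; (None, MLeft); K])
           | Some true => (Qry, [:: K; (Some B, MStay); K; K; K])
           | None => (Halt, [:: K; K; K; K; K]) end
  | Ans => (if rZ == O1 then Cmp else Out, [:: K; K; K; K; K])
  | Cmp => match rQ with
           | Some _ => (Cmp, [:: K; (None, MRight); K; K; (Some Z0, MRight)])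
           | None => (RewW, [:: K; K; K; K; K]) end
  | RewW => if rW == O1 then (Inc, [:: K; K; K; K; (None, MRight)])
            else (RewW, [:: K; (None, MLeft); K; K; (None, MLeft)])
  | Inc => match rZ with
           | Some _ => (Inc, [:: K; K; K; (None, MRight); K])
           | None => match rI with
                     | None => (Fin1, [:: K; K; K; K; K])
                     | Some _ => (Gen, [:: (None, MRight); K; K; (Some Z0, MStay); K]) end end
  | Fin1 => if rZ == O1 then (Copy, [:: K; K; K; (None, MRight); K])
            else (Fin1, [:: (None, MLeft); K; K; (None, MLeft); K])
  | Copy => match rI with
            | Some b => (Copy, [:: (None, MRight); (Some (Some b), MRight); K; K; K])
            | None => (Qry, [:: K; (Some B, MStay); K; K; K]) end
  | Out => if rW == Z0 then
             (Out, [:: K; (None, MRight); (Some (Some (rQ == O1)), MRight); K; (None, MRight)])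
           else (Halt, [:: K; K; K; K; K])
  | _ => (Halt, [:: K; K; K; K; K])
  end.

Definition i0 : 'I_5 := @Ordinal 5 0 isT.
Definition i1 : 'I_5 := @Ordinal 5 1 isT.
Definition i2 : 'I_5 := @Ordinal 5 2 isT.
Definition i3 : 'I_5 := @Ordinal 5 3 isT.
Definition i4 : 'I_5 := @Ordinal 5 4 isT.

Definition delta (q : st) (r : 'I_5 -> sym) : st * ('I_5 -> sym) * ('I_5 -> move) :=
  let: (q', acts) := dl q (r i0) (r i1) (r i2) (r i3) (r i4) in
  (q', fun i => odflt (r i) (nth K acts i).1, fun i : 'I_5 => (nth K acts i).2).

Definition M : otm := @OTM 2 st sym B Z0 O1 syms_uniq Start Qry Ans Halt delta.

Definition TP (t : tape M) (f : nat -> sym) (h : nat) :=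
  hpos t = h /\ forall j, nth B (cells t) j = f j.

Definition wr (f : nat -> sym) h (o : option sym) : nat -> sym :=
  match o with None => f | Some s => fun j => if j == h then s else f j end.
Definition mvp h (m : move) := match m with MLeft => h.-1 | MStay => h | MRight => h.+1 end.

Lemma TP_step t f h o m : TP t f h ->
  TP (tmove (twrite t (odflt (f h) o)) m) (wr f h o) (mvp h m).
Proof.
move=> H; have <- : tread t = f h by case: H => E1 E2; rewrite /tread E2 E1.
move: H.
case: t => c p [/= Hp Hc]; subst p; split; first by case: m.
move=> j.
have -> : cells (tmove (twrite (Tape c h) (odflt (tread (Tape c h)) o)) m)
   = set_nth B c h (odflt (nth B c h) o) by case: m.
rewrite nth_set_nth /=; case: o => [s|] /=; case: (j =P h) => [E|_]; by rewrite ?E ?Hc.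
Qed.

Lemma TP_ext t f g h : TP t f h -> f =1 g -> TP t g h.
Proof. by case=> H1 H2 E; split=> // j; rewrite H2 E. Qed.

Definition CF (c : config M) q (tI tQ tO tZ tW : (nat -> sym) * nat) :=
  [/\ c.1 = q, TP (c.2 i0) tI.1 tI.2, TP (c.2 i1) tQ.1 tQ.2, TP (c.2 i2) tO.1 tO.2
    & TP (c.2 i3) tZ.1 tZ.2 /\ TP (c.2 i4) tW.1 tW.2].

Definition nxt (t : (nat -> sym) * nat) (a : act) := (wr t.1 t.2 a.1, mvp t.2 a.2).

Lemma CF_step phi c q tI tQ tO tZ tW :
  CF c q tI tQ tO tZ tW -> q != Halt -> q != Qry ->
  let d := dl q (tI.1 tI.2) (tQ.1 tQ.2) (tO.1 tO.2) (tZ.1 tZ.2) (tW.1 tW.2) in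
  CF (step phi c) d.1 (nxt tI (nth K d.2 0)) (nxt tQ (nth K d.2 1)) (nxt tO (nth K d.2 2))
     (nxt tZ (nth K d.2 3)) (nxt tW (nth K d.2 4)).
Proof.
case: c => q0 tp [/= -> HI HQ HO [HZ HW]] nH nQ /=.
rewrite (negbTE nH) (negbTE nQ).
have rd : forall i f h, TP (tp i) f h -> tread (tp i) = f h.
  by move=> i f h [E1 E2]; rewrite /tread E2 E1.
rewrite /= /delta (rd _ _ _ HI) (rd _ _ _ HQ) (rd _ _ _ HO) (rd _ _ _ HZ) (rd _ _ _ HW).
case: (dl _ _ _ _ _ _) => q' acts /=.
split=> //=; last split.
- by rewrite (rd _ _ _ HI); apply: TP_step.
- by rewrite (rd _ _ _ HQ); apply: TP_step.
- by rewrite (rd _ _ _ HO); apply: TP_step.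
- by rewrite (rd _ _ _ HZ); apply: TP_step.
- by rewrite (rd _ _ _ HW); apply: TP_step.
Qed.

From mathcomp Require Import zify.

Definition enc_view (y : str) (j : nat) : sym := if j < size y then Some (nth false y j) else B.

Lemma nth_encode y j : nth B (encode M y) j = enc_view y j.
Proof.
rewrite /encode /enc_view; case: ltnP => H.
  by rewrite (nth_map false) //; case: nth.
by rewrite nth_default // size_map.
Qed.

Lemma decodeP (x : str) (s : seq sym) :
  (forall j, j < size x -> nth B s j = Some (nth false x j)) -> nth B s (size x) = B ->
  @decode M s = x.
Proof.
elim: x s => [|b x IH] [|y s] //= H1 H2.
- by rewrite H2.
- by have := H1 0 isT.
- have := H1 0 isT => /= ->; case: b {H1 H2} (H1) (H2) => H1 H2 /=;
  by rewrite IH // => j Hj; exact: (H1 j.+1 Hj).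
Qed.

Lemma idxI : idx_input M = i0. Proof. by apply: val_inj; rewrite /= inordK. Qed.
Lemma idxQ : idx_query M = i1. Proof. by apply: val_inj; rewrite /= inordK. Qed.
Lemma idxO : idx_output M = i2. Proof. by apply: val_inj; rewrite /= inordK. Qed.

Lemma CF_query phi c tI fQ hQ tO tZ tW x :
  CF c Qry tI (fQ, hQ) tO tZ tW ->
  (forall j, j < size x -> fQ j = Some (nth false x j)) -> fQ (size x) = B ->
  CF (step phi c) Ans tI (enc_view (phi x), 0) tO tZ tW.
Proof.
case: c => q tp [/= -> HI [_ HQ] HO [HZ HW]] H1 H2 /=.
have Hd : @decode M (cells (tp i1)) = x.
  by apply: decodeP; [move=> j Hj; rewrite HQ H1 | rewrite HQ H2].
rewrite idxQ; split=> //=. split=> // j /=. rewrite Hd. exact: (nth_encode (phi x) j).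
Qed.

Definition eqT (t t' : (nat -> sym) * nat) := t.1 =1 t'.1 /\ t.2 = t'.2.

Lemma CF_ext c q a1 a2 a3 a4 a5 b1 b2 b3 b4 b5 :
  CF c q a1 a2 a3 a4 a5 -> eqT a1 b1 -> eqT a2 b2 -> eqT a3 b3 -> eqT a4 b4 -> eqT a5 b5 ->
  CF c q b1 b2 b3 b4 b5.
Proof.
have T : forall t a b, TP t a.1 a.2 -> eqT a b -> TP t b.1 b.2.
  by move=> t a b [E1 E2] [F1 F2]; split; [rewrite -F2 | move=> j; rewrite -F1].
by case=> E H1 H2 H3 [H4 H5] T1 T2 T3 T4 T5; split => //; last split; apply: T; eauto.
Qed.

Lemma eqT_refl t : eqT t t. Proof. by []. Qed.

Ltac ifs := repeat match goal with |- context [if ?b then _ else _] => case: (boolP b) => ? end.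
Ltac substeq := repeat match goal with H : is_true (_ == _) |- _ => move/eqP: H => H; try subst end.
Ltac eqt := split; [move=> j /=; ifs; (reflexivity || (exfalso; lia) || (substeq; reflexivity) || idtac) | simpl; lia].

Lemma enc_viewB y j : size y <= j -> enc_view y j = B.
Proof. by rewrite /enc_view; case: ltnP. Qed.
Lemma enc_viewS y j : j < size y -> enc_view y j = Some (nth false y j).
Proof. by rewrite /enc_view => ->. Qed.
Lemma enc_viewO y j : (enc_view y j == O1) = nth false y j.
Proof. by rewrite /enc_view; case: ltnP => H; [case: nth | rewrite nth_default]. Qed.

Definition genQ (fQ : nat -> sym) p k : nat -> sym :=
  fun j => if (p <= j) && (j < p + k) then Z0 else if j == p + k then B else fQ j.

Lemma gen_phase phi k : forall c tI p fQ tO fZ tW,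
  CF c Gen tI (fQ, p) tO (fZ, k) tW -> fZ 0 = O1 -> (forall j, 0 < j <= k -> fZ j = Z0) ->
  CF (iter k.+1 (step phi) c) Qry tI (genQ fQ p k, p + k) tO (fZ, 0) tW.
Proof.
elim: k => [|k IH] c tI p fQ tO fZ tW H H0 Hk.
  have := CF_step phi H isT isT; rewrite /= H0 /= => /CF_ext; apply; try by [].
  rewrite /genQ; eqt.
rewrite iterSr.
have := CF_step phi H isT isT; rewrite /= Hk //= => /CF_ext H1.
have {H1} H1 : CF (step phi c) Gen tI (wr fQ p (Some Z0), p.+1) tO (fZ, k) tW.
  by apply: H1 => //.
have Hk' : forall j, 0 < j <= k -> fZ j = Z0 by move=> j Hj; apply: Hk; lia.
move/(_ _ _ _ _ _ _ _ H1 H0 Hk'): IH => /CF_ext; apply; try by [].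
rewrite /genQ /wr; eqt.
Qed.

Lemma cmp_phase phi y d : forall c tI p tO tZ fW,
  CF c Cmp tI (enc_view y, p) tO tZ (fW, p.+1) -> p + d = size y ->
  CF (iter d.+1 (step phi) c) RewW tI (enc_view y, size y) tO tZ
     (fun j => if (p < j) && (j <= size y) then Z0 else fW j, (size y).+1).
Proof.
elim: d => [|d IH] c tI p tO tZ fW H Hd.
  have := CF_step phi H isT isT; rewrite /= enc_viewB; last by lia.
  by move=> /= /CF_ext; apply; try by []; eqt.
rewrite iterSr.
have := CF_step phi H isT isT; rewrite /= enc_viewS; last by lia.
move=> /= /CF_ext H1.
have {H1} H1 : CF (step phi c) Cmp tI (enc_view y, p.+1) tO tZ (wr fW p.+1 (Some Z0), p.+2).
  by apply: H1 => //.
have Hd' : p.+1 + d = size y by lia.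
move/(_ _ _ _ _ _ _ H1 Hd'): IH => /CF_ext; apply; try by [].
rewrite /wr; eqt.
Qed.

Lemma rew_phase phi h : forall c tI fQ hQ tO tZ fW,
  CF c RewW tI (fQ, hQ) tO tZ (fW, h) -> fW 0 = O1 -> (forall j, 0 < j <= h -> fW j != O1) ->
  CF (iter h.+1 (step phi) c) Inc tI (fQ, hQ - h) tO tZ (fW, 1).
Proof.
elim: h => [|h IH] c tI fQ hQ tO tZ fW H H0 Hh.
  have := CF_step phi H isT isT; rewrite /= H0 eqxx.
  by move=> /= /CF_ext; apply; try by []; eqt.
rewrite iterSr.
have := CF_step phi H isT isT; rewrite /= (negbTE (Hh h.+1 _)); last by lia.
move=> /= /CF_ext H1.
have {H1} H1 : CF (step phi c) RewW tI (fQ, hQ.-1) tO tZ (fW, h).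
  by apply: H1 => //.
have Hh' : forall j, 0 < j <= h -> fW j != O1 by move=> j Hj; apply: Hh; lia.
move/(_ _ _ _ _ _ _ _ H1 H0 Hh'): IH => /CF_ext; apply; try by [].
eqt.
Qed.

Lemma fin_phase phi h : forall c fI hI tQ tO fZ tW,
  CF c Fin1 (fI, hI) tQ tO (fZ, h) tW -> fZ 0 = O1 -> (forall j, 0 < j <= h -> fZ j != O1) ->
  CF (iter h.+1 (step phi) c) Copy (fI, hI - h) tQ tO (fZ, 1) tW.
Proof.
elim: h => [|h IH] c fI hI tQ tO fZ tW H H0 Hh.
  have := CF_step phi H isT isT; rewrite /= H0 eqxx.
  by move=> /= /CF_ext; apply; try by []; eqt.
rewrite iterSr.
have := CF_step phi H isT isT; rewrite /= (negbTE (Hh h.+1 _)); last by lia.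
move=> /= /CF_ext H1.
have {H1} H1 : CF (step phi c) Fin1 (fI, hI.-1) tQ tO (fZ, h) tW.
  by apply: H1 => //.
have Hh' : forall j, 0 < j <= h -> fZ j != O1 by move=> j Hj; apply: Hh; lia.
move/(_ _ _ _ _ _ _ _ H1 H0 Hh'): IH => /CF_ext; apply; try by [].
eqt.
Qed.

Lemma inc_phase phi d : forall c fI hI tQ tO fZ p tW,
  CF c Inc (fI, hI) tQ tO (fZ, p) tW -> (forall j, p <= j < p + d -> fZ j != B) ->
  fZ (p + d) = B ->
  (fI hI = B -> CF (iter d.+1 (step phi) c) Fin1 (fI, hI) tQ tO (fZ, p + d) tW) /\
  (fI hI != B -> CF (iter d.+1 (step phi) c) Gen (fI, hI.+1) tQ tO
                    (wr fZ (p + d) (Some Z0), p + d) tW).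
Proof.
elim: d => [|d IH] c fI hI tQ tO fZ p tW H Hd HB.
  rewrite addn0 in HB.
  have := CF_step phi H isT isT; rewrite /= HB.
  case E: (fI hI) => [s|] /= H1; split=> // _; apply: (CF_ext H1); try by []; eqt.
rewrite iterSr.
have Hp : fZ p != B by apply: Hd; lia.
have := CF_step phi H isT isT; rewrite /=.
case E: (fZ p) Hp => [s|] // _ /= /CF_ext H1.
have {H1} H1 : CF (step phi c) Inc (fI, hI) tQ tO (fZ, p.+1) tW.
  by apply: H1 => //.
have Hd' : forall j, p.+1 <= j < p.+1 + d -> fZ j != B by move=> j Hj; apply: Hd; lia.
have HB' : fZ (p.+1 + d) = B by rewrite -HB; congr fZ; lia.
have [IH1 IH2] := IH _ _ _ _ _ _ _ _ H1 Hd' HB'.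
split=> Hc.
  by apply: (CF_ext (IH1 Hc)); try by []; eqt.
by apply: (CF_ext (IH2 Hc)); try by []; rewrite /wr; eqt.
Qed.

Lemma copy_phase phi a d : forall c p fQ tO tZ tW,
  CF c Copy (enc_view a, p) (fQ, p) tO tZ tW -> p + d = size a ->
  CF (iter d.+1 (step phi) c) Qry (enc_view a, size a)
     (fun j => if (p <= j) && (j < size a) then Some (nth false a j)
               else if j == size a then B else fQ j, size a) tO tZ tW.
Proof.
elim: d => [|d IH] c p fQ tO tZ tW H Hd.
  have := CF_step phi H isT isT; rewrite /= enc_viewB; last by lia.
  by move=> /= /CF_ext; apply; try by []; rewrite /wr; eqt.
rewrite iterSr.
have := CF_step phi H isT isT; rewrite /= enc_viewS; last by lia.
move=> /= /CF_ext H1.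
have {H1} H1 : CF (step phi c) Copy (enc_view a, p.+1)
   (wr fQ p (Some (Some (nth false a p))), p.+1) tO tZ tW.
  by apply: H1 => //.
have Hd' : p.+1 + d = size a by lia.
move/(_ _ _ _ _ _ _ H1 Hd'): IH => /CF_ext; apply; try by [].
rewrite /wr; eqt.
Qed.

Lemma out_phase phi y g d : forall c tI p fO tZ fW,
  CF c Out tI (enc_view y, p) (fO, p) tZ (fW, p.+1) ->
  (forall j, 0 < j <= g -> fW j = Z0) -> fW g.+1 = B -> p + d = g ->
  CF (iter d.+1 (step phi) c) Halt tI (enc_view y, g)
     (fun j => if (p <= j) && (j < g) then Some (nth false y j) else fO j, g) tZ (fW, g.+1).
Proof.
elim: d => [|d IH] c tI p fO tZ fW H Hg HB Hd.
  have E : p = g by lia.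
  subst p; have := CF_step phi H isT isT; rewrite /= HB /=.
  by move=> /CF_ext; apply; try by []; eqt.
rewrite iterSr.
have := CF_step phi H isT isT; rewrite /= Hg; last by lia.
rewrite eqxx enc_viewO => /= /CF_ext H1.
have {H1} H1 : CF (step phi c) Out tI (enc_view y, p.+1)
   (wr fO p (Some (Some (nth false y p))), p.+1) tZ (fW, p.+2).
  by apply: H1 => //.
have Hd' : p.+1 + d = g by lia.
move/(_ _ _ _ _ _ _ H1 Hg HB Hd'): IH => /CF_ext; apply; try by [].
rewrite /wr; eqt.
Qed.

Definition empty : nat -> sym := fun _ => B.
Definition Zc k : nat -> sym := fun j => if j == 0 then O1 else if j <= k then Z0 else B.
Definition LoopInv c a k w fQ :=
  CF c Gen (enc_view a, k) (fQ, 0) (empty, 0) (Zc k, k) (Zc w, 1).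

Ltac zc := rewrite /Zc /empty; ifs; (reflexivity || (exfalso; lia) || done).

Lemma iter_loop phi a k w fQ c : k <= size a -> LoopInv c a k w fQ ->
  let y := phi (nseq k false) in
  let m := 2 * k + 2 * size y + 8 in
  (k < size a -> LoopInv (iter m (step phi) c) a k.+1 (maxn w (size y)) (enc_view y)) /\
  (k = size a -> CF (iter m (step phi) c) Fin1 (enc_view a, k) (enc_view y, 0) (empty, 0)
                    (Zc k, k.+1) (Zc (maxn w (size y)), 1)).
Proof.
move=> Hk HL y m.
have HZ : forall j, 0 < j <= k -> Zc k j = Z0 by move=> j Hj; zc.
have H1 := gen_phase phi HL (erefl _) HZ.
have {}H1 : CF (iter k.+1 (step phi) c) Qry (enc_view a, k) (genQ fQ 0 k, k) (empty, 0)
   (Zc k, 0) (Zc w, 1).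
  by apply: (CF_ext H1); try by []; eqt.
have H2 := CF_query phi (x := nseq k false) H1.
have {}H2 : CF (step phi (iter k.+1 (step phi) c)) Ans (enc_view a, k) (enc_view y, 0) (empty, 0)
   (Zc k, 0) (Zc w, 1).
  apply: H2; rewrite size_nseq.
    by move=> j Hj; rewrite nth_nseq Hj /genQ Hj.
  by rewrite /genQ ltnn eqxx.
have H3 := CF_step phi H2 isT isT; rewrite /= in H3.
have {}H3 : CF (step phi (step phi (iter k.+1 (step phi) c))) Cmp (enc_view a, k) (enc_view y, 0)
   (empty, 0) (Zc k, 0) (Zc w, 1).
  by apply: (CF_ext H3).
have H4 := cmp_phase phi (d := size y) H3 (erefl _).
have HW : forall j, 0 < j <= (size y).+1 ->
                 (if (0 < j) && (j <= size y) then Z0 else Zc w j) != O1.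
  by move=> j Hj; zc.
have H5 := rew_phase phi (h := (size y).+1) H4 (erefl _) HW.
have HZ2 : forall j, 0 <= j < 0 + k.+1 -> Zc k j != B by move=> j Hj; zc.
have HZ3 : Zc k (0 + k.+1) = B by zc.
have [H6 H7] := inc_phase phi (d := k.+1) H5 HZ2 HZ3.
have E : iter m (step phi) c = iter k.+2 (step phi) (iter (size y).+2 (step phi)
   (iter (size y).+1 (step phi) (iter 1 (step phi) (iter 1 (step phi) (iter k.+1 (step phi) c))))).
  by rewrite -!iterD; congr iter; rewrite /m; lia.
rewrite E; split=> Ha.
  have Hs : enc_view a k != B by rewrite enc_viewS.
  by apply: (CF_ext (H7 Hs)); try by []; rewrite /wr /Zc; eqt.
have Hs : enc_view a k = B by rewrite enc_viewB // Ha.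
by apply: (CF_ext (H6 Hs)); try by []; rewrite /Zc; eqt.
Qed.

Lemma mem_strings_of_len (s : str) : s \in strings_of_len (size s).
Proof.
elim: s => [|b s IH] //=.
by rewrite !mem_cat; case: b; rewrite (map_f _ IH) ?orbT.
Qed.

Lemma size_le_sizefun (phi : strfun) s n : size s <= n -> size (phi s) <= sizefun phi n.
Proof.
move=> Hs; rewrite /sizefun.
apply: (leq_bigmax_seq (F := fun a => size (phi a)) s _ isT).
apply/flatten_mapP; exists (size s); last exact: mem_strings_of_len.
by rewrite mem_iota; lia.
Qed.

Fixpoint gw (phi : strfun) k : nat :=
  if k is k'.+1 then maxn (gw phi k') (size (phi (nseq k' false))) else 0.

Lemma gw_le phi n k : k <= n.+1 -> gw phi k <= sizefun phi n.
Proof.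
elim: k => [|k IH] Hk //=.
rewrite geq_max IH ?size_le_sizefun ?size_nseq //; lia.
Qed.

Lemma gw_mono phi m n : m <= n -> gw phi m <= gw phi n.
Proof.
elim: n => [|n IH] H; first by case: m H.
case: (ltngtP m n.+1) H => // [Hl|->] _; last by [].
by apply: leq_trans (IH _) _ => //=; apply: leq_maxl.
Qed.

Lemma loop_all phi a c0 : LoopInv c0 a 0 0 empty -> forall k, k <= size a ->
  exists m fQ, m <= k * (2 * size a + 2 * sizefun phi (size a) + 8) /\
               LoopInv (iter m (step phi) c0) a k (gw phi k) fQ.
Proof.
move=> H0; elim=> [|k IH] Hk; first by exists 0, empty.
have [m [fQ [Hm HL]]] := IH (ltnW Hk).
have [H1 _] := iter_loop phi (ltnW Hk) HL.
exists (2 * k + 2 * size (phi (nseq k false)) + 8 + m), (enc_view (phi (nseq k false))).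
split; last by rewrite iterD; apply: H1.
have : size (phi (nseq k false)) <= sizefun phi (size a).
  by apply: size_le_sizefun; rewrite size_nseq; apply: ltnW.
move=> ?; nia.
Qed.

Definition Rf (phi : strfun) : strfun := fun a => mkseq (nth false (phi a)) (gw phi (size a).+1).

Definition Pb : sopoly :=
  SAdd (SMul (SAdd SVar (SConst 1))
             (SAdd (SAdd (SMul (SConst 2) SVar) (SMul (SConst 2) (SApp SVar))) (SConst 8)))
       (SAdd (SAdd (SMul (SConst 2) SVar) (SApp SVar)) (SConst 7)).

Lemma machine_correct phi a : exists t, t <= sop_eval Pb (sizefun phi) (size a) /\
  halted (run M phi a t) /\ output (run M phi a t) = Rf phi a.
Proof.
have Hinit : CF (init_config M a) Start (enc_view a, 0) (empty, 0) (empty, 0) (empty, 0) (empty, 0).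
  rewrite /init_config idxI; split=> //=; last split; split=> // j /=; rewrite ?nth_encode ?nth_nil //.
have H0 : LoopInv (step phi (init_config M a)) a 0 0 empty.
  have := CF_step phi Hinit isT isT => /= /CF_ext; apply; try by []; rewrite /wr /Zc /empty; eqt.
have [m [fQ [Hm HL]]] := loop_all phi H0 (leqnn (size a)).
have [_ H2] := iter_loop phi (leqnn (size a)) HL.
have {H2} H2 := H2 erefl.
have HZ : forall j, 0 < j <= (size a).+1 -> Zc (size a) j != O1 by move=> j Hj; zc.
have H3 := fin_phase phi (h := (size a).+1) H2 (erefl _) HZ.
set y := phi (nseq (size a) false) in H2 H3.
set g := maxn (gw phi (size a)) (size y) in H2 H3.
set c1 := iter _ (step phi) (iter m _ _) in H2 H3.
have H4 : CF (iter (size a).+2 (step phi) c1) Copy (enc_view a, 0) (enc_view y, 0) (empty, 0)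
   (Zc (size a), 1) (Zc g, 1).
  by apply: (CF_ext H3); try by []; eqt.
have H5 := copy_phase phi (d := size a) H4 (erefl _).
have H6 := CF_query phi (x := a) H5.
have {}H6 : CF (step phi (iter (size a).+1 (step phi) (iter (size a).+2 (step phi) c1))) Ans
   (enc_view a, size a) (enc_view (phi a), 0) (empty, 0) (Zc (size a), 1) (Zc g, 1).
  apply: H6; first by move=> j Hj; rewrite Hj.
  by rewrite ltnn eqxx.
have H7 := CF_step phi H6 isT isT.
have HZ1 : (Zc (size a) 1 == O1) = false by rewrite /Zc; case: (1 <= size a).
rewrite /= HZ1 /= in H7.
have {}H7 : CF (step phi (step phi (iter (size a).+1 (step phi) (iter (size a).+2 (step phi) c1))))
   Out (enc_view a, size a) (enc_view (phi a), 0) (empty, 0) (Zc (size a), 1) (Zc g, 1).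
  by apply: (CF_ext H7).
have HWg : forall j, 0 < j <= g -> Zc g j = Z0 by move=> j Hj; zc.
have HWB : Zc g g.+1 = B by zc.
have H8 := out_phase phi (d := g) H7 HWg HWB (erefl _).
pose t := g.+1 + (1 + (1 + ((size a).+1 + ((size a).+2 +
          ((2 * size a + 2 * size y + 8) + (m + 1)))))).
have E : run M phi a t = ltac:(match type of H8 with CF ?c _ _ _ _ _ _ => exact c end).
  have E1 : iter t (step phi) (init_config M a) = iter g.+1 (step phi) (iter 1 (step phi)
     (iter 1 (step phi) (iter (size a).+1 (step phi) (iter (size a).+2 (step phi)
     (iter (2 * size a + 2 * size y + 8) (step phi) (iter m (step phi)
     (iter 1 (step phi) (init_config M a)))))))).
    rewrite -!iterD; suff -> : t = g.+1 + 1 + 1 + (size a).+1 + (size a).+2 + (2 * size a + 2 * size y + 8) + m + 1 by []; rewrite /t; lia.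
  exact: E1.
exists t; split.
  have Hy : size y <= sizefun phi (size a) by apply: size_le_sizefun; rewrite size_nseq.
  have Hg : g <= sizefun phi (size a) by apply: (gw_le phi (k := (size a).+1)).
  rewrite /t /=; nia.
rewrite E; case: H8 => Eq _ _ [HOp HO] _; split; first by rewrite /halted Eq.
rewrite /output idxO /Rf.
apply: decodeP; rewrite size_mkseq.
  by move=> j Hj; rewrite HO /= Hj nth_mkseq.
by rewrite HO /= ltnn.
Qed.

From Stdlib Require Import FunctionalExtensionality.

Lemma Rf_mono phi : length_monotone (Rf phi).
Proof. by move=> a b H; rewrite /Rf !size_mkseq; apply: gw_mono; lia. Qed.

Lemma gw_lm phi : length_monotone phi -> forall n, gw phi n.+1 = size (phi (nseq n false)).
Proof.
move=> Hm; elim=> [|n IH]; first by rewrite /= max0n.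
change (maxn (gw phi n.+1) (size (phi (nseq n.+1 false))) = size (phi (nseq n.+1 false))); rewrite IH; apply/maxn_idPr; apply: Hm; rewrite !size_nseq; lia.
Qed.

Theorem mainTheorem7 :
  exists R : strfun -> strfun,
    polytime_functional R /\
    (forall phi : strfun, length_monotone (R phi)) /\
    (forall phi : strfun, length_monotone phi -> R phi = phi).
Proof.
exists Rf; split; last split.
- by exists M, Pb => phi a; apply: machine_correct.
- exact: Rf_mono.
- move=> phi Hm; apply: functional_extensionality => a.
  rewrite /Rf gw_lm //.
  have -> : size (phi (nseq (size a) false)) = size (phi a).
    by apply/eqP; rewrite eqn_leq !Hm ?size_nseq.
  exact: mkseq_nth.
Qed.
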